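(* For every $k\in\mathbb{N}$ there exists a 2-coloring of the edges of $K_\mathbb{N}$ such that every set $X\subseteq\mathbb{N}$ which is $k$-wise self-intersecting in some color has upper density at most $1/(2k)$.
   Context: For a 2-coloring of $K_\mathbb{N}$ (vertex set $\mathbb{N}$) and a color $i$, let $N_i(v)$ be the set of vertices joined to $v$ by an edge of color $i$, and for finite nonempty $S$ let $N_i^\cap(S)=\bigcap_{v\in S}N_i(v)$. A set $X\subseteq\mathbb{N}$ is $k$-wise self-intersecting in color $i$ if for every nonempty $S\subseteq X$ with $|S|\le k$, the set $X\cap N_i^\cap(S)$ is infinite. Upper density: $\overline{d}(X)=\limsup_{t\to\infty}|X\cap\{1,\dots,t\}|/t$. *)

(* Defs.v *)
From HB Require Import structures.
From mathcomp Require Import all_boot all_order all_algebra.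
From mathcomp Require Import finmap.
From mathcomp Require Import all_classical all_reals all_analysis.
From mathcomp Require Import Rstruct Rstruct_topology.
Set Implicit Arguments. Unset Strict Implicit. Unset Printing Implicit Defensive.
Import Order.TTheory GRing.Theory Num.Theory.
Local Open Scope classical_set_scope.
Local Open Scope ring_scope.

(* A 2-coloring of the edges of K_N: c x y is the color (a bool) of edge {x,y},
   required symmetric (values on the diagonal are irrelevant). *)
Definition symmetric_coloring (c : nat -> nat -> bool) : Prop :=
  forall x y : nat, c x y = c y x.

Definition nbhd (c : nat -> nat -> bool) (i : bool) (v : nat) : set nat :=
  [set w | w <> v /\ c v w = i].

Definition common_nbhd (c : nat -> nat -> bool) (i : bool) (S : {fset nat}) : set nat :=
  [set w | forall v : nat, v \in S -> nbhd c i v w].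

Definition self_intersecting (k : nat) (c : nat -> nat -> bool) (i : bool)
    (X : set nat) : Prop :=
  forall S : {fset nat}, S != fset0 -> (forall v : nat, v \in S -> X v) ->
    leq (#|` S|)%fset k -> infinite_set (X `&` common_nbhd c i S).

Definition count_upto (X : set nat) (t : nat) : nat :=
  (\sum_(1 <= n < t.+1) (`[< X n >] : nat))%N.

Definition upper_density (X : set nat) : Rdefinitions.R :=
  limn_sup (fun t : nat => (count_upto X t)%:R / t%:R).

(* Main.v *)
Require Import Defs.
From HB Require Import structures.
From mathcomp Require Import all_boot all_order all_algebra.
From mathcomp Require Import finmap.
From mathcomp Require Import all_classical all_reals all_analysis.
From mathcomp Require Import Rstruct Rstruct_topology.
From mathcomp Require Import zify.
Import Order.TTheory GRing.Theory Num.Theory.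
Local Open Scope classical_set_scope.
Local Open Scope ring_scope.

Definition col (k : nat) (x y : nat) : bool :=
  odd (maxn x y) (+) (x %% (2 * k) == y %% (2 * k))%N.

Lemma odd_modm k x : odd (x %% (2 * k)) = odd x.
Proof. by rewrite odd_mod // oddM. Qed.

Lemma count_odd_iota k (i : bool) :
  count (fun r => odd r == i) (iota 0 (2 * k)) = k.
Proof.
elim: k => [|k IH]; first by [].
rewrite (_ : (2 * k.+1 = 2 * k + 2)%N); last by rewrite mulnS addnC.
rewrite iotaD count_cat IH /= add0n oddM /=.
by case: (i); rewrite /= ?addn0 ?addn1.
Qed.
Lemma dummy : True. Proof. exact I.
Qed.

Lemma stepA k (hk : (1 <= k)%N) (i : bool) (X : set nat) :
  self_intersecting k (col k) i X -> forall x, X x -> odd x = ~~ i.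
Proof.
move=> hsi x0 Xx0; case: (boolP (odd x0 == i)); last first.
  by case: (i); case: (odd x0).
move=> /eqP ox0; exfalso.
have m0 : (0 < 2 * k)%N by rewrite muln_gt0.
pose P r := [set x | X x /\ (x %% (2 * k))%N = r].
pose rep r := xget 0%N (P r).
pose R := [seq r <- iota 0 (2*k) | (odd r == i) && `[< exists x, P r x >]].
pose S := seq_fset tt (map rep R).
have memS s : (s \in S) = (s \in map rep R) by rewrite seq_fsetE.
have repP r : r \in R -> X (rep r) /\ (rep r %% (2 * k))%N = r.
  rewrite mem_filter => /andP[/andP[_ /asboolP ex] _].
  exact: (xgetPex 0%N ex).
set r0 := (x0 %% (2 * k))%N.
have r0R : r0 \in R.
  rewrite mem_filter mem_iota /= add0n ltn_pmod // andbT odd_modm ox0 eqxx /=.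
  by apply/asboolP; exists x0.
have repS r : r \in R -> rep r \in S by move=> rR; rewrite memS map_f.
have Sne : S != fset0.
  by apply/negP => /eqP E; have := repS _ r0R; rewrite E in_fset0.
have SX : forall v, v \in S -> X v.
  by move=> v; rewrite memS => /mapP[r rR ->]; case: (repP r rR).
have Sk : (#|` S| <= k)%N.
  rewrite size_seq_fset (leq_trans (size_undup _)) // size_map size_filter.
  rewrite -{2}(count_odd_iota k i); apply: sub_count => r /= /andP[] //.
have := hsi S Sne SX Sk; apply.
pose N := (\max_(r <- R) rep r)%N.
apply: (@sub_finite_set _ _ `I_(N.+1)); last exact: finite_II.
move=> y [Xy Cy]; rewrite /= ltnNge; apply/negP => Hy.
have sN r : r \in R -> (rep r < y)%N.
  by move=> rR; apply: leq_ltn_trans Hy; exact: (leq_bigmax_seq _ rR).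
have [oy|oy] := eqVneq (odd y) i.
- have yR : (y %% (2 * k))%N \in R.
    rewrite mem_filter mem_iota /= add0n ltn_pmod // andbT odd_modm oy eqxx /=.
    by apply/asboolP; exists y.
  have [_ ] := Cy _ (repS _ yR).
  rewrite /col (maxn_idPr (ltnW (sN _ yR))) (proj2 (repP _ yR)) eqxx oy.
  by case: (i).
- have [_ ] := Cy _ (repS _ r0R).
  rewrite /col (maxn_idPr (ltnW (sN _ r0R))) (proj2 (repP _ r0R)).
  have -> : (r0 == y %% (2 * k))%N = false.
    apply/negP => /eqP E; move: oy; rewrite -(odd_modm k y) -E /r0 odd_modm ox0.
    by rewrite eqxx.
  by rewrite addbF => E; move: oy; rewrite E eqxx.
Qed.

Lemma stepB k (hk : (1 <= k)%N) (i : bool) (X : set nat) :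
  self_intersecting k (col k) i X -> (forall x, X x -> odd x = ~~ i) ->
  forall a b, X a -> X b -> (a %% (2 * k) = b %% (2 * k))%N.
Proof.
move=> hsi hodd a b Xa Xb; have [//|nab] := eqVneq (a %% (2*k))%N (b %% (2*k))%N; exfalso.
have k2 : (2 <= k)%N.
  case: k hk hsi nab => [|[|k]] // _ _.
  by rewrite muln1 !modn2 (hodd a) // (hodd b) // eqxx.
pose S : {fset nat} := [fset a; b]%fset.
have aS : a \in S by rewrite !inE eqxx.
have Sne : S != fset0 by apply/negP => /eqP E; move: aS; rewrite E in_fset0.
have SX : forall v, v \in S -> X v by move=> v; rewrite !inE => /orP[]/eqP->.
have Sk : (#|` S| <= k)%N by rewrite (leq_trans _ k2) // cardfs2; case: (a != b).
have := hsi S Sne SX Sk; apply.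
apply: (@sub_finite_set _ _ `I_((maxn a b).+1)); last exact: finite_II.
move=> y [Xy Cy]; rewrite /= ltnNge; apply/negP => Hy.
have bS : b \in S by rewrite !inE eqxx orbT.
have [_ ] := Cy _ aS; have [_ ] := Cy _ bS.
rewrite /col !(maxn_idPr (ltnW (leq_ltn_trans _ Hy))) ?leq_maxl ?leq_maxr //.
rewrite hodd //.
move=> E1 E2; move/eqP: nab; apply.
have e1 : (b %% (2 * k) == y %% (2 * k))%N by move: E1; case: (i); case: (_ == _).
have e2 : (a %% (2 * k) == y %% (2 * k))%N by move: E2; case: (i); case: (_ == _).
by rewrite (eqP e1) (eqP e2).
Qed.

Lemma count_bound (X : set nat) (m : nat) :
  (forall a b, X a -> X b -> (a < b)%N -> (a + m <= b)%N) ->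
  forall t, (count_upto X t <= t)%N /\ (count_upto X t * m <= t + m)%N.
Proof.
move=> gap.
suff H : forall t, (count_upto X t <= t)%N /\
  (count_upto X t = 0%N \/ exists y, [/\ X y, (y <= t)%N & ((count_upto X t).-1 * m + 1 <= y)%N]).
  move=> t; have [H1 [->|[y [_ yt hy]]]] := H t; split => //.
  by case: (count_upto X t) hy => [|g] /=; lia.
elim => [|t [IH1 IH2]]; first by rewrite /count_upto big_geq //; split => //; left.
have cE : count_upto X t.+1 = (count_upto X t + `[< X t.+1 >])%N.
  by rewrite /count_upto big_nat_recr.
rewrite cE; case: (asboolP (X t.+1)) => Xt /=.
- split; first by rewrite addn1.
  right; exists t.+1; split => //; rewrite addn1 /=.
  case: IH2 => [->|[y [Xy yt hy]]]; first by rewrite mul0n.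
  have := gap y t.+1 Xy Xt (leq_ltn_trans yt (ltnSn t)).
  by case: (count_upto X t) hy => [|g] /=; lia.
- rewrite addn0; split; first by rewrite (leq_trans IH1).
  case: IH2 => [->|[y [Xy yt hy]]]; first by left.
  by right; exists y; split => //; rewrite (leq_trans yt).
Qed.
Lemma limsup_le (u : nat -> Rdefinitions.R) (l : Rdefinitions.R) :
  (forall n, 0 <= u n <= 1) -> (forall n, u n.+1 <= l + n.+1%:R^-1) ->
  limn_sup u <= l.
Proof.
move=> hb hl.
have ub : has_ubound (range u).
  by exists 1 => _ [n _ <-]; case/andP: (hb n).
have lb : has_lbound (range (sups u)).
  exists 0 => _ [n _ <-]; apply: (le_trans (proj1 (andP (hb n)))).
  by apply: ub_le_sup; [exact: has_ubound_sdrop|exists n => /=].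
have cs : cvgn (sups u) by apply: nonincreasing_is_cvgn => //; exact: nonincreasing_sups.
apply/ler_addgt0Pr => e e0.
apply: limr_le => //.
have [N _ HN] := near_infty_natSinv_lt (PosNum e0).
near=> n.
have Nn : (N < n)%N by near: n; exists N.+1.
apply: ge_sup; first by exists (u n); exists n => /=.
move=> _ [m /= nm <-].
case: m nm => [|m] nm; first by rewrite leqn0 in nm; move: Nn; rewrite (eqP nm).
apply: (le_trans (hl m)); rewrite lerD2l; apply/ltW.
apply: HN => /=. by rewrite -ltnS (leq_trans Nn nm).
Unshelve. all: by end_near. Qed.

Theorem mainTheorem11 (k : nat) (hk : (1 <= k)%N) :
  exists c : nat -> nat -> bool, symmetric_coloring c /\
    forall (i : bool) (X : set nat),
      (forall n : nat, X n -> (1 <= n)%N) ->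
      self_intersecting k c i X ->
      upper_density X <= 1 / (2 * k)%:R.
Proof.
exists (col k); split; first by move=> x y; rewrite /col maxnC eq_sym.
move=> i X hpos hsi.
have h1 := @stepA k hk i X hsi.
have h2 := @stepB k hk i X hsi h1.
have m0 : (0 < 2 * k)%N by rewrite muln_gt0.
have gap : forall a b, X a -> X b -> (a < b)%N -> (a + 2 * k <= b)%N.
  move=> a b Xa Xb ab.
  have ab' := ltnW ab.
  have H : (2 * k %| b - a)%N by rewrite -(eqn_mod_dvd _ ab') (h2 b a Xb Xa).
  have ba : (0 < b - a)%N by rewrite subn_gt0.
  have := dvdn_leq ba H.
  by move=> h; rewrite -(subnKC ab') leq_add2l.
have cb := @count_bound X _ gap.
apply: limsup_le => n.
- have [c1 _] := cb n.
  case: n c1 => [|n] c1.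
    by rewrite /count_upto big_geq // mul0r lexx ler01.
  rewrite divr_ge0 ?ler0n //= ler_pdivrMr ?ltr0n // mul1r ler_nat //.
- have [_ c2] := cb n.+1.
  move: c2; set G := count_upto X n.+1; set M := (2 * k)%N => c2.
  have Mp : (0 : Rdefinitions.R) < M%:R by rewrite ltr0n.
  have Tp : (0 : Rdefinitions.R) < n.+1%:R by rewrite ltr0n.
  rewrite ler_pdivrMr // mulrDl mulVf ?gt_eqF // -lerBlDr mul1r mulrC.
  rewrite ler_pdivlMr // mulrBl mul1r lerBlDr -natrM -natrD ler_nat.
  exact: c2.
Qed.
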